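(* Let $k\ge2$, let $\Pi\subseteq\mathfrak S_k$ be a nonoverlapping set of patterns, and let $I$ be a finite set of positive integers with $m=\max(I\cup\{0\})$. Then there is a function $g$ in the $\mathbb Q$-vector space $V_\Pi$ spanned by the functions $n\mapsto n^{j}\,\mathrm{av}_\Pi(n+l)$ ($j\in\mathbb Z_{\ge0}$, $l\in\mathbb Z$) such that $\#\Pi(I;n)=g(n)$ for all integers $n\ge m+k-1$.
   Context: Two integer sequences $a_1\cdots a_k$ and $b_1\cdots b_k$ are order isomorphic if $a_i<a_j\iff b_i<b_j$ for all $i,j$. For $\sigma\in\mathfrak S_k$, a permutation $\pi\in\mathfrak S_n$ contains a consecutive copy of $\sigma$ at index $i$ if $\pi_i\pi_{i+1}\cdots\pi_{i+k-1}$ is order isomorphic to $\sigma$. For a set $\Pi$ of patterns, $\Pi(I;n)$ is the set of $\pi\in\mathfrak S_n$ such that the set of indices $i$ at which $\pi$ contains a consecutive copy of some $\sigma\in\Pi$ is exactly $I$, and $\mathrm{av}_\Pi(n)=\#\Pi(\emptyset;n)$ (with $\mathrm{av}_\Pi(n)$ understood as $\#\Pi(\emptyset;n)$ for all integers $n\ge0$). $\Pi\subseteq\mathfrak S_k$ is nonoverlapping if for all (not necessarily distinct) $\sigma,\tau\in\Pi$ and every $l$ with $1<l<k$, the length-$l$ prefix of $\sigma$ is not order isomorphic to the length-$l$ suffix of $\tau$. *)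

(* Defs.v *)
From HB Require Import structures.
From mathcomp Require Import all_boot all_order all_algebra all_fingroup.
Set Implicit Arguments. Unset Strict Implicit. Unset Printing Implicit Defensive.
Import Order.TTheory GRing.Theory Num.Theory.

(* One-line notation of a permutation of 'I_n (values in 0..n-1). *)
Definition word n (p : {perm 'I_n}) : seq nat := [seq val (p i) | i <- enum 'I_n].

Definition order_iso (a b : seq nat) : bool :=
  (size a == size b) &&
  [forall i : 'I_(size a), forall j : 'I_(size a),
     (nth 0 a i < nth 0 a j) == (nth 0 b i < nth 0 b j)].

(* pi contains a consecutive copy of sigma at (1-based) index i. *)
Definition occurs_at n k (pi : {perm 'I_n}) (sigma : {perm 'I_k}) (i : nat) : bool :=
  [&& 0 < i, i + k - 1 <= n & order_iso (take k (drop i.-1 (word pi))) (word sigma)].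

Definition occ_indices n k (Pi : {set {perm 'I_k}}) (pi : {perm 'I_n}) : seq nat :=
  [seq i <- iota 1 n | [exists s in Pi, occurs_at pi s i]].

Definition PiI k (Pi : {set {perm 'I_k}}) (I : seq nat) (n : nat) : nat :=
  #|[set pi : {perm 'I_n} |
      all (fun i => i \in I) (occ_indices Pi pi) &&
      all (fun i => i \in occ_indices Pi pi) I]|.

Definition av k (Pi : {set {perm 'I_k}}) (n : nat) : nat := PiI Pi [::] n.

Definition avZ k (Pi : {set {perm 'I_k}}) (z : int) : rat :=
  match z with Posz n => (av Pi n)%:R | Negz _ => 0%R end.

Definition nonoverlapping k (Pi : {set {perm 'I_k}}) : Prop :=
  forall s t, s \in Pi -> t \in Pi -> forall l, 1 < l < k ->
    ~~ order_iso (take l (word s)) (drop (k - l) (word t)).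

Definition in_V k (Pi : {set {perm 'I_k}}) (g : int -> rat) : Prop :=
  exists s : seq (rat * nat * int),
    forall z : int,
      g z = (\sum_(t <- s) t.1.1 * (z%:~R) ^+ t.1.2 * avZ Pi (z + t.2))%R.

(* Main.v *)
Require Import Defs.
From HB Require Import structures.
From mathcomp Require Import all_boot all_order all_algebra all_fingroup.
From mathcomp Require Import zify ring.
Set Implicit Arguments. Unset Strict Implicit. Unset Printing Implicit Defensive.


Lemma order_isoP a b : reflect (size a = size b /\
  forall i j, i < size a -> j < size a -> (nth 0 a i < nth 0 a j) = (nth 0 b i < nth 0 b j))
  (order_iso a b).
Proof.
apply: (iffP andP) => [[/eqP hs /forallP H]|[hs H]]; split => //.
- move=> i j hi hj; have /forallP/(_ (Ordinal hj))/eqP := H (Ordinal hi); done.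
- by apply/eqP.
- by apply/forallP => i; apply/forallP => j; apply/eqP; apply: H.
Qed.

Lemma order_iso_sym a b : order_iso a b -> order_iso b a.
Proof.
move/order_isoP => [hs H]; apply/order_isoP; split=> // i j hi hj.
by rewrite H // hs.
Qed.

Lemma order_iso_trans a b c : order_iso a b -> order_iso b c -> order_iso a c.
Proof.
move/order_isoP => [hs H] /order_isoP [hs' H']; apply/order_isoP; split; first by rewrite hs.
by move=> i j hi hj; rewrite H // H' // -hs.
Qed.

Lemma order_iso_l a b c : order_iso a b -> order_iso a c = order_iso b c.
Proof.
move=> hab; apply/idP/idP => h.
  exact: order_iso_trans (order_iso_sym hab) h.
exact: order_iso_trans hab h.
Qed.

Lemma order_iso_take l a b : order_iso a b -> order_iso (take l a) (take l b).
Proof.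
move/order_isoP => [hs H]; apply/order_isoP; split; first by rewrite !size_take hs.
move=> i j; rewrite size_take => hi hj.
have hl : forall x, x < minn l (size a) -> x < l /\ x < size a.
  by move=> x; rewrite leq_min => /andP.
case: (hl _ hi) => hi1 hi2; case: (hl _ hj) => hj1 hj2.
by rewrite !nth_take // H.
Qed.

Lemma order_iso_drop d a b : order_iso a b -> order_iso (drop d a) (drop d b).
Proof.
move/order_isoP => [hs H]; apply/order_isoP; split; first by rewrite !size_drop hs.
move=> i j; rewrite size_drop => hi hj.
by rewrite !nth_drop H // -ltn_subRL.
Qed.

Lemma size_word n (p : {perm 'I_n}) : size (word p) = n.
Proof. by rewrite /word size_map size_enum_ord. Qed.

Section Occ.
Variables (k : nat) (Pi : {set {perm 'I_k}}).

Definition occ_seq (w : seq nat) (i : nat) : bool :=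
  [&& 0 < i, i + k - 1 <= size w &
      [exists s in Pi, order_iso (take k (drop i.-1 w)) (word s)]].

Lemma occ_seq_iso u u' i : order_iso u u' -> occ_seq u i = occ_seq u' i.
Proof.
move=> h; rewrite /occ_seq; have /order_isoP [-> _] := h.
congr [&& _, _ & _]; apply: eq_existsb => s; congr (_ && _).
by apply: order_iso_l; apply: order_iso_take; apply: order_iso_drop.
Qed.

Lemma occ_word n (p : {perm 'I_n}) i :
  [exists s in Pi, occurs_at p s i] = occ_seq (word p) i.
Proof.
rewrite /occ_seq /occurs_at size_word.
case: (0 < i) => //=; last by apply/existsP => -[s]; rewrite andbF.
case: (i + k - 1 <= n) => //=; last by apply/existsP => -[s]; rewrite andbF.
Qed.

Lemma occ_seq_le w i : occ_seq w i -> 0 < i /\ i + k - 1 <= size w.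
Proof. by case/and3P. Qed.

Lemma mem_occ_indices n (p : {perm 'I_n}) i :
  1 <= k -> (i \in occ_indices Pi p) = occ_seq (word p) i.
Proof.
move=> k1; rewrite /occ_indices mem_filter occ_word mem_iota.
case h: (occ_seq _ _); rewrite ?andbF //= ?andbT.
case/occ_seq_le: h; rewrite size_word => h1 h2; apply/andP; split; lia.
Qed.

Lemma exactP n (p : {perm 'I_n}) (J : seq nat) : 1 <= k ->
  reflect (forall i, occ_seq (word p) i = (i \in J))
   (all (fun i => i \in J) (occ_indices Pi p) && all (fun i => i \in occ_indices Pi p) J).
Proof.
move=> k1; apply: (iffP andP) => [[/allP h1 /allP h2] i|h].
  apply/idP/idP => hi; first by apply: h1; rewrite mem_occ_indices.
  by rewrite -mem_occ_indices //; apply: h2.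
split; apply/allP => i; rewrite mem_occ_indices // h //.
Qed.

Lemma PiI_eq_mem J J' n : 1 <= k -> J =i J' -> PiI Pi J n = PiI Pi J' n.
Proof.
move=> k1 hJ; rewrite /PiI; apply: eq_card => p; rewrite !inE.
apply/exactP/exactP => // h i; by rewrite h hJ.
Qed.

Hypothesis k2 : 2 <= k.
Hypothesis nonov : nonoverlapping Pi.

Lemma no_close w i j : occ_seq w i -> occ_seq w j -> i < j -> j + 1 < i + k -> False.
Proof.
case/and3P => hi0 _ /existsP [sg /andP [hsg isg]].
case/and3P => hj0 _ /existsP [tu /andP [htu itu]] hij hjk.
have hl : 1 < i + k - j < k by apply/andP; split; lia.
have /negP := nonov htu hsg hl; apply.
set l := i + k - j.
have e1 : take l (take k (drop j.-1 w)) = take l (drop j.-1 w) by rewrite take_takel //; lia.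
have e2 : drop (k - l) (take k (drop i.-1 w)) = take l (drop j.-1 w).
  have -> : take k (drop i.-1 w) = take (l + (k - l)) (drop i.-1 w) by congr take; lia.
  rewrite -take_drop drop_drop; congr (take _ (drop _ _)); lia.
apply: order_iso_trans (order_iso_take l (order_iso_sym itu)) _.
rewrite e1 -e2; exact: order_iso_drop.
Qed.

End Occ.


Lemma nth_map_enum a (g : 'I_a -> nat) x (hx : x < a) :
  nth 0 [seq g i | i <- enum 'I_a] x = g (Ordinal hx).
Proof.
rewrite (nth_map (Ordinal hx)) ?size_enum_ord //; congr g; apply: val_inj => /=.
by rewrite nth_enum_ord.
Qed.

Lemma order_iso_map a (g h : 'I_a -> nat) :
  (forall i j, (g i < g j) = (h i < h j)) ->
  order_iso [seq g i | i <- enum 'I_a] [seq h i | i <- enum 'I_a].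
Proof.
move=> H; apply/order_isoP; split; first by rewrite !size_map.
move=> x y; rewrite size_map size_enum_ord => hx hy; by rewrite !(nth_map_enum _ hx) !(nth_map_enum _ hy).
Qed.

Definition iso_inv (Q : pred (seq nat)) := forall x y, order_iso x y -> Q x = Q y.

Lemma card_set_sum (T : finType) (B : pred T) : #|[set x | B x]| = \sum_x (B x : nat).
Proof.
rewrite -sum1_card big_mkcond /=; apply: eq_bigr => x _; rewrite inE; by case: (B x).
Qed.

Lemma reorder a (f : 'I_a -> nat) (Q : pred (seq nat)) : injective f -> iso_inv Q ->
  #|[set r : {perm 'I_a} | Q [seq f (r i) | i <- enum 'I_a]]| =
  #|[set p : {perm 'I_a} | Q (word p)]|.
Proof.
move=> finj hQ.
have rank_lt : forall i, #|[set j | f j < f i]| < a.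
  move=> i; suff h : #|[set j | f j < f i]| < #|[set: 'I_a]| by rewrite cardsT card_ord in h.
  apply: proper_card; apply/properP; split.
    exact: subsetT.
  by exists i; rewrite ?inE // ltnn.
pose rk i : 'I_a := Ordinal (rank_lt i).
have key : forall i j, (f i < f j) = (rk i < rk j).
  move=> i j; rewrite /=; apply/idP/idP => h.
    apply: proper_card; apply/properP; split.
      by apply/subsetP => x; rewrite !inE => hx; apply: ltn_trans hx h.
    by exists i; rewrite !inE ?ltnn.
  apply: contraTT h; rewrite -!leqNgt /= => h; apply: subset_leq_card.
  by apply/subsetP => x; rewrite !inE => hx; apply: leq_trans hx h.
have rk_inj : injective rk.
  move=> i j e; apply: finj; case: (ltngtP (f i) (f j)) => // h; move: h;
  by rewrite key e ltnn.
pose p0 := perm rk_inj.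
have -> : [set r : {perm 'I_a} | Q [seq f (r i) | i <- enum 'I_a]] =
          (fun r => r * p0)%g @^-1: [set p : {perm 'I_a} | Q (word p)].
  apply/setP => r; rewrite !inE; apply: hQ; rewrite /word.
  apply: order_iso_map => i j; by rewrite !permM !permE key.
by apply: card_preimset; apply: mulIg.
Qed.

Lemma enum_ordD a b :
  enum 'I_(a + b) = [seq lshift b i | i <- enum 'I_a] ++ [seq rshift a j | j <- enum 'I_b].
Proof.
have e1 : forall s : seq 'I_a, [seq val x | x <- [seq lshift b i | i <- s]] = [seq val i | i <- s].
  by elim => //= x s ->.
have e2 : forall s : seq 'I_b, [seq val x | x <- [seq rshift a i | i <- s]] = [seq a + val i | i <- s].
  by elim => //= x s ->.
apply: (inj_map val_inj); rewrite map_cat e1 e2 val_enum_ord iotaD val_enum_ord add0n.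
congr (_ ++ _); have -> : [seq a + val i | i <- enum 'I_b] = map (addn a) (map val (enum 'I_b)).
  by elim: (enum 'I_b) => //= x s ->.
by rewrite val_enum_ord -{1}(addn0 a) iotaDl.
Qed.

Definition extf a b (r1 : {perm 'I_a}) (r2 : {perm 'I_b}) (x : 'I_(a + b)) : 'I_(a + b) :=
  unsplit (match split x with inl i => inl (r1 i) | inr j => inr (r2 j) end).

Lemma extf_inj a b r1 r2 : injective (@extf a b r1 r2).
Proof.
move=> x y; rewrite /extf => /(can_inj unsplitK) e; apply: (can_inj splitK).
move: e; case: (split x) => i; case: (split y) => j // [] /perm_inj -> //.
Qed.

Definition ext a b r1 r2 := perm (@extf_inj a b r1 r2).

Lemma word_split a b (p : {perm 'I_(a + b)}) :
  word p = [seq val (p (lshift b i)) | i <- enum 'I_a] ++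
           [seq val (p (rshift a j)) | j <- enum 'I_b].
Proof. by rewrite /word enum_ordD map_cat -!map_comp. Qed.

Lemma take_word a b (p : {perm 'I_(a + b)}) :
  take a (word p) = [seq val (p (lshift b i)) | i <- enum 'I_a].
Proof. by rewrite word_split take_size_cat // size_map size_enum_ord. Qed.

Lemma drop_word a b (p : {perm 'I_(a + b)}) :
  drop a (word p) = [seq val (p (rshift a j)) | j <- enum 'I_b].
Proof. by rewrite word_split drop_size_cat // size_map size_enum_ord. Qed.

Lemma split_count a b (P R : pred (seq nat)) : iso_inv P -> iso_inv R ->
  #|[set p : {perm 'I_(a + b)} | P (take a (word p)) && R (drop a (word p))]| =
  'C(a + b, a) * #|[set p : {perm 'I_a} | P (word p)]| * #|[set q : {perm 'I_b} | R (word q)]|.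
Proof.
move=> hP hR.
set N := #|_|.
pose fL (p : {perm 'I_(a + b)}) (i : 'I_a) := val (p (lshift b i)).
pose fR (p : {perm 'I_(a + b)}) (j : 'I_b) := val (p (rshift a j)).
have fLi : forall p, injective (fL p).
  by move=> p i j /val_inj /perm_inj /lshift_inj.
have fRi : forall p, injective (fR p).
  by move=> p i j /val_inj /perm_inj /rshift_inj.
have e1 : forall r1 r2 p,
   P (take a (word (ext r1 r2 * p)%g)) && R (drop a (word (ext r1 r2 * p)%g)) =
   P [seq fL p (r1 i) | i <- enum 'I_a] && R [seq fR p (r2 j) | j <- enum 'I_b].
  move=> r1 r2 p; rewrite take_word drop_word; congr (P _ && R _); apply: eq_map => i;
  by rewrite permM permE /extf /= ?(unsplitK (inl _)) ?(unsplitK (inr _)).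
have hN : forall (r1 : {perm 'I_a}) (r2 : {perm 'I_b}), N = #|[set p | P (take a (word (ext r1 r2 * p)%g)) &&
                                       R (drop a (word (ext r1 r2 * p)%g))]|.
  move=> r1 r2; rewrite /N -[LHS](card_preimset _ (mulgI (ext r1 r2))).
  by apply: eq_card => p; rewrite !inE.
have : a`! * (b`! * N) = (a + b)`! * (#|[set p : {perm 'I_a} | P (word p)]| *
                                      #|[set q : {perm 'I_b} | R (word q)]|).
  have -> : a`! * (b`! * N) = \sum_(r1 : {perm 'I_a}) \sum_(r2 : {perm 'I_b}) N.
    by rewrite sum_nat_const card_Sn; congr (_ * _); rewrite sum_nat_const card_Sn.
  under eq_bigr => r1 _ do under eq_bigr => r2 _ do rewrite (hN r1 r2) card_set_sum.
  rewrite exchange_big /=.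
  under eq_bigr => r1 _ do rewrite exchange_big /=.
  rewrite exchange_big /= -card_Sn -sum_nat_const; apply: eq_bigr => p _.
  under eq_bigr => r1 _ do under eq_bigr => r2 _ do rewrite e1 -mulnb.
  rewrite -(reorder (fLi p) hP) -(reorder (fRi p) hR) !card_set_sum big_distrl /=.
  by rewrite exchange_big; apply: eq_bigr => r1 _; rewrite big_distrr.
have := bin_fact (leq_addr b a); rewrite addKn => hb.
rewrite -hb mulnA => h.
apply/eqP; rewrite -(eqn_pmul2r (_ : 0 < a`! * b`!)) ?muln_gt0 ?fact_gt0 //.
apply/eqP; move: h; rewrite -!mulnA; lia.
Qed.

Section V.
Variables (k : nat) (Pi : {set {perm 'I_k}}).
Import Order.TTheory GRing.Theory Num.Theory.
Local Open Scope ring_scope.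

Lemma V_ext (f g : int -> rat) : in_V Pi f -> (forall z, f z = g z) -> in_V Pi g.
Proof. by move=> [s hs] e; exists s => z; rewrite -e hs. Qed.

Lemma V_av (l : int) : in_V Pi (fun z => avZ Pi (z + l)).
Proof. by exists [:: (1, 0%N, l)] => z; rewrite big_seq1 /= expr0 !mul1r. Qed.

Lemma V_zero : in_V Pi (fun _ => 0).
Proof. by exists [::] => z; rewrite big_nil. Qed.

Lemma V_add (f g : int -> rat) : in_V Pi f -> in_V Pi g -> in_V Pi (fun z => f z + g z).
Proof. by move=> [s hs] [t ht]; exists (s ++ t) => z; rewrite big_cat hs ht. Qed.

Lemma V_scale (c : rat) (f : int -> rat) : in_V Pi f -> in_V Pi (fun z => c * f z).
Proof.
move=> [s hs]; exists [seq (c * t.1.1, t.1.2, t.2) | t <- s] => z.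
by rewrite big_map hs mulr_sumr; apply: eq_bigr => t _ /=; rewrite !mulrA.
Qed.

Lemma V_mulz (f : int -> rat) : in_V Pi f -> in_V Pi (fun z => z%:~R * f z).
Proof.
move=> [s hs]; exists [seq (t.1.1, t.1.2.+1, t.2) | t <- s] => z.
rewrite big_map hs mulr_sumr; apply: eq_bigr => t _ /=.
by rewrite exprS !mulrA [_ * t.1.1]mulrC.
Qed.

Lemma V_sub (f g : int -> rat) : in_V Pi f -> in_V Pi g -> in_V Pi (fun z => f z - g z).
Proof.
move=> hf hg; apply: V_ext (V_add hf (V_scale (-1) hg)) _ => z.
by rewrite mulN1r.
Qed.

Lemma V_sum (T : eqType) (xs : seq T) (F : T -> int -> rat) :
  (forall x, x \in xs -> in_V Pi (F x)) -> in_V Pi (fun z => \sum_(x <- xs) F x z).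
Proof.
elim: xs => [|x xs IH] H.
  by apply: V_ext V_zero _ => z; rewrite big_nil.
have IH' : in_V Pi (fun z => \sum_(x <- xs) F x z).
  by apply: IH => y hy; apply: H; rewrite inE hy orbT.
by apply: V_ext (V_add (H x (mem_head _ _)) IH') _ => z; rewrite big_cons.
Qed.

Lemma V_ff (m : nat) (l : int) :
  in_V Pi (fun z => (\prod_(t < m) (z%:~R - t%:R)) * avZ Pi (z + l)).
Proof.
elim: m => [|m IH].
  by apply: V_ext (V_av l) _ => z; rewrite big_ord0 mul1r.
apply: V_ext (V_sub (V_mulz IH) (V_scale m%:R IH)) _ => z.
by rewrite big_ord_recr /=; ring.
Qed.

End V.



Lemma card_partS (T : finType) (A : pred T) (S : seq nat) (p : nat -> pred T) :
  uniq S -> (forall x j j', A x -> j \in S -> j' \in S -> p j x -> p j' x -> j = j') ->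
  #|[set x | A x]| = #|[set x | A x && ~~ has (fun j => p j x) S]| +
                     \sum_(j <- S) #|[set x | A x && p j x]|.
Proof.
move=> uS hd; under eq_bigr => j _ do rewrite card_set_sum.
rewrite !card_set_sum exchange_big -big_split /=; apply: eq_bigr => x _.
case hA: (A x) => /=; last by rewrite big1.
case: hasP => [[j0 hj0 hp0]|hn] /=.
  rewrite (bigD1_seq _ hj0 uS) /= hp0 big1_seq //.
  move=> j /andP [hj hjS]; case hpj: (p j x) => //; move: hj.
  by rewrite (hd x j j0) ?eqxx.
rewrite big1_seq // => j /= hj; case hpj: (p j x) => //; case: hn; exists j => //.
Qed.


Section Main.
Variables (k : nat) (Pi : {set {perm 'I_k}}).
Hypothesis k2 : 2 <= k.
Hypothesis nonov : nonoverlapping Pi.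

Lemma k1 : 0 < k. Proof. exact: ltnW. Qed.

Definition Pm m (J0 : seq nat) (u : seq nat) :=
  all (fun i => occ_seq Pi u i == (i \in J0)) (iota 0 m.+1).
Definition Rn (v : seq nat) := all (fun i => ~~ occ_seq Pi v i) (iota 0 (size v).+1).

Lemma Pm_inv m J0 : iso_inv (Pm m J0).
Proof. by move=> x y h; apply: eq_all => i; rewrite (occ_seq_iso _ _ h). Qed.

Lemma Rn_inv : iso_inv Rn.
Proof.
move=> x y h; have /order_isoP [hs _] := h; rewrite /Rn hs.
by apply: eq_all => i; rewrite (occ_seq_iso _ _ h).
Qed.

Lemma occ_take m w i : i + k <= m.+1 -> m <= size w ->
  occ_seq Pi (take m w) i = occ_seq Pi w i.
Proof.
have := k1; case: i => [|i] hk //= h hm; rewrite /occ_seq /= size_take_min.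
have -> : minn m (size w) = m by apply/minn_idPl.
have -> : i.+1 + k - 1 <= m by lia.
have -> : i.+1 + k - 1 <= size w by lia.
by rewrite /= take_drop [in RHS]take_drop take_takel //; lia.
Qed.

Lemma occ_take_out m w i : m.+1 < i + k -> occ_seq Pi (take m w) i = false.
Proof.
move=> h; apply/negbTE/negP => /occ_seq_le [_]; rewrite size_take_min; lia.
Qed.

Lemma occ_drop m w i : 0 < i -> occ_seq Pi (drop m w) i = occ_seq Pi w (m + i).
Proof.
have := k1; case: i => // i hk _; rewrite /occ_seq /= size_drop drop_drop addnS /=.
have -> : (i.+1 + k - 1 <= size w - m) = (m + i.+1 + k - 1 <= size w).
  by apply/idP/idP; lia.
by rewrite addnS (addnC i m).
Qed.

Lemma occ0 w : occ_seq Pi w 0 = false.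
Proof. by []. Qed.

Lemma A_char m J0 n (p : {perm 'I_n}) : m <= n -> (forall i, i \in J0 -> i + k <= m.+1) ->
  (Pm m J0 (take m (word p)) && Rn (drop m (word p))) <->
  ((forall i, i + k <= m.+1 -> occ_seq Pi (word p) i = (i \in J0)) /\
   (forall i, m < i -> ~~ occ_seq Pi (word p) i)).
Proof.
move=> hmn hJ0; have hk := k1; set w := word p; have sw : size w = n by apply: size_word.
split.
- case/andP => /allP hP /allP hR; split.
    move=> i hi; have := hP i; rewrite mem_iota (occ_take hi) ?sw //.
    by move=> /(_ _)/eqP; apply; lia.
  move=> i hi; have -> : i = m + (i - m) by lia.
  rewrite -occ_drop; last by lia.
  case: (leqP (i - m) (size (drop m w))) => h.
    by apply: hR; rewrite mem_iota; lia.
  by apply/negP => /occ_seq_le [_]; lia.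
- case => h1 h2; apply/andP; split; apply/allP => i; rewrite mem_iota => hi.
    case: (leqP (i + k) m.+1) => h.
      by rewrite occ_take ?sw // h1.
    rewrite occ_take_out //; apply/eqP; symmetry; apply/negbTE/negP => /hJ0; lia.
  case: i hi => [|i] hi //; rewrite occ_drop // h2 //; lia.
Qed.


Lemma Y_formula m J0 n : m <= n ->
  #|[set p : {perm 'I_n} | Pm m J0 (take m (word p)) && Rn (drop m (word p))]| =
  'C(n, m) * #|[set p : {perm 'I_m} | Pm m J0 (word p)]| * av Pi (n - m).
Proof.
move=> hmn; have H := split_count m (n - m) (@Pm_inv m J0) Rn_inv.
rewrite (subnKC hmn) in H; rewrite H; congr (_ * _).
rewrite /av /PiI; apply: eq_card => q; rewrite !inE.
apply/idP/(exactP _ _ _ k1) => [/allP hR i|h].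
  apply/negbTE; case: (leqP i (size (word q))) => hi.
    by apply: hR; rewrite mem_iota; lia.
  apply/negP => /occ_seq_le [_]; have := k1; lia.
by apply/allP => i _; rewrite h.
Qed.

Definition strad m := [seq j <- iota 1 m | m.+1 < j + k].

Lemma Y_decomp m J0 n : m <= n -> (forall i, i \in J0 -> 0 < i /\ i + k <= m.+1) ->
  #|[set p : {perm 'I_n} | Pm m J0 (take m (word p)) && Rn (drop m (word p))]| =
  PiI Pi J0 n + \sum_(j <- strad m) PiI Pi (j :: J0) n.
Proof.
move=> hmn hJ0.
have hJ0' : forall i, i \in J0 -> i + k <= m.+1 by move=> i /hJ0 [].
have notJ0 : forall i, m.+1 < i + k \/ i = 0 -> (i \in J0) = false.
  move=> i hi; apply/negbTE/negP => /hJ0 [h1 h2]; lia.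
rewrite (card_partS _ (S := strad m) (p := fun j (q : {perm 'I_n}) => occ_seq Pi (word q) j)); last first.
- move=> x j j' _; rewrite !mem_filter !mem_iota => hj hj' o o'.
  case: (ltngtP j j') => // h; exfalso.
    by apply: (no_close k2 nonov o o' h); lia.
  by apply: (no_close k2 nonov o' o h); lia.
- by rewrite filter_uniq // iota_uniq.
congr (_ + _).
  rewrite /PiI; apply: eq_card => q; rewrite !inE; apply/idP/(exactP _ _ _ k1).
    case/andP => /(@A_char m J0 n q hmn hJ0') [h1 h2] hn i.
    case: (leqP (i + k) m.+1) => hi; first exact: h1.
    case: (leqP i m) => him; last by rewrite (negbTE (h2 _ him)) notJ0 //; left.
    case: i hi him => [|i] hi him; first by rewrite occ0 notJ0 //; right.
    have hs : i.+1 \in strad m by rewrite mem_filter mem_iota; lia.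
    by rewrite (negbTE (hasPn hn _ hs)) notJ0 //; left.
  move=> h; apply/andP; split.
    apply/(@A_char m J0 n q hmn hJ0'); split; first by move=> i _; rewrite h.
    by move=> i hi; rewrite h notJ0 //; left; lia.
  apply/hasPn => j; rewrite mem_filter mem_iota => hj; rewrite h notJ0 //; left; lia.
apply: eq_big_seq => j hj; rewrite /PiI; apply: eq_card => q; rewrite !inE.
move: hj; rewrite mem_filter mem_iota => hj.
apply/idP/(exactP _ _ _ k1).
  case/andP => /(@A_char m J0 n q hmn hJ0') [h1 h2] oj i; rewrite in_cons.
  case: (eqVneq i j) => [->|hij] /=; first by rewrite oj.
  case: (leqP (i + k) m.+1) => hi; first exact: h1.
  case: (leqP i m) => him; last by rewrite (negbTE (h2 _ him)) notJ0 //; left.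
  case: i hi him hij => [|i] hi him hij; first by rewrite occ0 notJ0 //; right.
  rewrite notJ0; last by left.
  apply/negbTE/negP => oi; case: (ltngtP i.+1 j) => h.
  - by apply: (no_close k2 nonov oi oj h); lia.
  - by apply: (no_close k2 nonov oj oi h); lia.
  - by move: hij; rewrite h eqxx.
move=> h; apply/andP; split; last by rewrite h in_cons eqxx.
apply/(@A_char m J0 n q hmn hJ0'); split.
  move=> i hi; rewrite h in_cons; case: eqP => //= e; lia.
move=> i hi; rewrite h in_cons notJ0; last by left; lia.
by case: eqP => //= e; lia.
Qed.

End Main.


Section Ind.
Import Order.TTheory GRing.Theory Num.Theory.
Variables (k : nat) (Pi : {set {perm 'I_k}}).
Hypothesis k2 : 2 <= k.
Hypothesis nonov : nonoverlapping Pi.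

Lemma sum_ex (xs : seq nat) (F : nat -> nat -> nat) T :
  (forall j, j \in xs -> exists g, in_V Pi g /\ forall n, T <= n -> ((F j n)%:R = g (Posz n))%R) ->
  exists G, in_V Pi G /\ forall n, T <= n -> ((\sum_(j <- xs) F j n)%:R = G (Posz n))%R.
Proof.
elim: xs => [|x xs IH] H.
  exists (fun _ => 0%R); split; first exact: V_zero.
  by move=> n _; rewrite big_nil.
have [g [hg eg]] := H x (mem_head _ _).
have [G [hG eG]] : exists G, in_V Pi G /\ forall n, T <= n ->
    ((\sum_(j <- xs) F j n)%:R = G (Posz n))%R.
  by apply: IH => j hj; apply: H; rewrite inE hj orbT.
exists (fun z => g z + G z)%R; split; first exact: V_add.
by move=> n hn; rewrite big_cons natrD eg // eG.
Qed.

Lemma Y_g m q : exists g, in_V Pi g /\ forall n, m <= n ->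
  (('C(n, m) * q * av Pi (n - m))%:R = g (Posz n))%R.
Proof.
exists (fun z => (q%:R / (m`!)%:R) * (\prod_(t < m) (z%:~R - t%:R) * avZ Pi (z + - (m%:Z))))%R.
split; first exact: V_scale (V_ff Pi m _).
move=> n hmn.
have -> : (Posz n + - Posz m)%R = Posz (n - m) by rewrite subzn.
have -> : (\prod_(t < m) ((Posz n)%:~R - t%:R) = (n ^_ m)%:R :> rat)%R.
  rewrite ffact_prod natr_prod; apply: eq_bigr => t _.
  by rewrite natrB // ltnW // (leq_trans (ltn_ord t)).
rewrite /= -bin_ffact !natrM.
have hf : ((m`!)%:R != 0 :> rat)%R by rewrite pnatr_eq0 -lt0n fact_gt0.
by field.
Qed.

Lemma main_ind M : forall J, all (fun i => 0 < i) J -> all (fun i => i <= M) J ->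
  exists g : int -> rat, in_V Pi g /\
    forall n, M + k - 1 <= n -> ((PiI Pi J n)%:R = g (Posz n))%R.
Proof.
have hk := k1 k2.
elim: M => [|M IH] J hpos hle.
  exists (fun z => avZ Pi (z + 0)); split; first exact: V_av.
  move=> n _; rewrite addr0 /=.
  rewrite (PiI_eq_mem Pi (J' := [::])) // => i; rewrite in_nil.
  apply/negbTE/negP => hi; move/allP: hpos => /(_ _ hi); move/allP: hle => /(_ _ hi); lia.
set m := M.+1.
case hm: (m \in J); last first.
  have hle' : all (fun i => i <= M) J.
    apply/allP => i hi; move/allP: hle => /(_ _ hi); rewrite leq_eqVlt ltnS.
    by case/orP => // /eqP ei; move: hm; rewrite /m -ei hi.
  have [g [hg eg]] := IH J hpos hle'.
  by exists g; split => // n hn; apply: eg; lia.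
case hA: (has (fun i => (i != m) && (m.+1 < i + k)) J).
  exists (fun _ => 0%R); split; first exact: V_zero.
  move=> n hn; apply/eqP; rewrite pnatr_eq0 /PiI; apply/eqP; apply: eq_card0 => q.
  rewrite !inE; apply/negP => /(exactP _ _ _ hk) h.
  case/hasP: hA => i0 hi0 /andP [hne hlt].
  have hi0m : i0 < m.
    move/allP: hle => /(_ _ hi0); rewrite leq_eqVlt ltnS; case/orP => //.
    by move/eqP => e; move: hne; rewrite e eqxx.
  have o1 : occ_seq Pi (word q) i0 by rewrite h.
  have o2 : occ_seq Pi (word q) m by rewrite h.
  by apply: (no_close k2 nonov o1 o2 hi0m); lia.
pose J0 := [seq i <- J | i + k <= m.+1].
have hJJ : J =i m :: J0.
  move=> i; rewrite in_cons mem_filter; case: (eqVneq i m) => [->|hne] /=.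
    by rewrite hm.
  case hi: (i \in J); rewrite ?andbF // andbT.
  symmetry; apply/negPn/negP => h; move/negP: hA; apply; apply/hasP; exists i => //.
  by rewrite hne /=; lia.
have hJ0 : forall i, i \in J0 -> 0 < i /\ i + k <= m.+1.
  move=> i; rewrite mem_filter => /andP [h1 h2]; split => //.
  by move/allP: hpos => /(_ _ h2).
have hpos0 : all (fun i => 0 < i) J0 by apply/allP => i /hJ0 [].
have hle0 : all (fun i => i <= M) J0 by apply/allP => i /hJ0 [_ h]; lia.
have [g0 [hg0 eg0]] := IH J0 hpos0 hle0.
have hS : strad k m = [seq j <- iota 1 M | m.+1 < j + k] ++ [:: m].
  have e : iota 1 m = iota 1 M ++ [:: m] by have := iotaD 1 M 1; rewrite addn1 add1n.
  rewrite /strad e filter_cat /=; congr (_ ++ _).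
  by rewrite ifT //; lia.
have hsub : forall j, j \in [seq j <- iota 1 M | m.+1 < j + k] -> exists g, in_V Pi g /\
    forall n, M + k - 1 <= n -> ((PiI Pi (j :: J0) n)%:R = g (Posz n))%R.
  move=> j; rewrite mem_filter mem_iota => /andP [hj1 hj2].
  apply: IH; rewrite /= ?hpos0 ?hle0 ?andbT; lia.
have [G [hG eG]] := sum_ex (F := fun j n => PiI Pi (j :: J0) n) hsub.
have [gY [hgY egY]] := Y_g m #|[set p : {perm 'I_m} | Pm Pi m J0 (word p)]|.
exists (fun z => gY z - g0 z - G z)%R; split.
  by apply: V_sub; [apply: V_sub|].
move=> n hn.
have hmn : m <= n by lia.
have := Y_decomp k2 nonov hmn hJ0; rewrite Y_formula // hS big_cat big_seq1 /=.
move=> /(congr1 (fun x : nat => (x%:R : rat))); rewrite !natrD egY //.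
rewrite (PiI_eq_mem Pi _ hk hJJ) eg0 ?eG; try lia.
move=> ->; ring.
Qed.

End Ind.

Theorem theorem6p1 (k : nat) (Pi : {set {perm 'I_k}}) (I : seq nat) :
  2 <= k ->
  nonoverlapping Pi ->
  all (fun i => 0 < i) I ->
  let m := \max_(i <- I) i in
  exists g : int -> rat,
    in_V Pi g /\
    forall n : nat, m + k - 1 <= n -> ((PiI Pi I n)%:R = g (Posz n))%R.
Proof.
move=> k2 nonov hpos m.
apply: (main_ind k2 nonov) => //.
by apply/allP => i hi; apply: (@leq_bigmax_seq _ I predT id i hi).
Qed.
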